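(* Let $\pi$ be a $k$-permutation and $i,j\in\mathbb{N}_0$. If $i\le k-2$ and $j\le k-2$, then $$c_{i,j}(P_\pi)=\frac{k!\,(-1)^{i+j}}{i!\,j!\,(k-i-2)!\,(k-j-2)!}\left(\mathbf{b}_{i+2}^T\,A_\pi\,\mathbf{b}_{j+2}\right),$$ and otherwise $c_{i,j}(P_\pi)=0$.
   Context: A $k$-permutation is a bijection of $[k]=\{1,\dots,k\}$. Its gradient polynomial is $P_\pi(\alpha,\beta)=k!\sum_{m\in[k]}\left(\frac{k-m}{1-\alpha}-\frac{m-1}{\alpha}\right)\left(\frac{k-\pi(m)}{1-\beta}-\frac{\pi(m)-1}{\beta}\right)\frac{\alpha^{m-1}(1-\alpha)^{k-m}\beta^{\pi(m)-1}(1-\beta)^{k-\pi(m)}}{(m-1)!(k-m)!(\pi(m)-1)!(k-\pi(m))!}$ (a polynomial in $\alpha,\beta$). For a polynomial $P(\alpha,\beta)$, $c_{i,j}(P)$ is the coefficient of $\alpha^i\beta^j$. The permutation matrix $A_\pi\in\mathbb{R}^{k\times k}$ has $(A_\pi)_{i,j}=1$ if $\pi(i)=j$ and $0$ otherwise. For $a\in[k]$, $\mathbf{b}_a=\mathbf{b}^k_a\in\mathbb{R}^k$ is the column vector with $(\mathbf{b}_a)_\ell=(-1)^{\ell-1}\binom{a-1}{\ell-1}$ for $1\le\ell\le a$ and $(\mathbf{b}_a)_\ell=0$ for $\ell>a$. *)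

(* Defs.v *)
From HB Require Import structures.
From mathcomp Require Import all_boot all_order all_algebra all_fingroup.
Set Implicit Arguments. Unset Strict Implicit. Unset Printing Implicit Defensive.
Import Order.TTheory GRing.Theory Num.Theory.
Local Open Scope ring_scope.

(* Convention: [k] = {1,...,k} is represented by 'I_k = {0,...,k-1};
   the element m : 'I_k stands for m+1 in [k]. A k-permutation is pi : 'S_k. *)

(* The gradient polynomial P_pi(alpha,beta), as the rational expression of the
   paper (valid for alpha, beta not in {0,1}). With m' = m+1:
   k-m' = k-m-1, m'-1 = m, pi(m')-1 = pi m, k-pi(m') = k - pi m - 1. *)
Definition gradP (R : realFieldType) (k : nat) (pi : 'S_k) (a b : R) : R :=
  (k`!)%:R * \sum_(m < k)
    (((k - m.+1)%:R / (1 - a) - m%:R / a) *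
     ((k - (pi m).+1)%:R / (1 - b) - (pi m)%:R / b) *
     (a ^+ m * (1 - a) ^+ (k - m.+1) * b ^+ (pi m) * (1 - b) ^+ (k - (pi m).+1)) /
     ((m`!)%:R * ((k - m.+1)`!)%:R * ((pi m)`!)%:R * ((k - (pi m).+1)`!)%:R)).

(* Bivariate polynomials in alpha, beta are {poly {poly R}}: outer variable beta,
   inner variable alpha; p evaluated at (a,b) is p.[b%:P].[a].
   c_{i,j}(p) = coefficient of alpha^i beta^j. *)
Definition coef2 (R : ringType) (p : {poly {poly R}}) (i j : nat) : R :=
  (p`_j)`_i.

(* b^k_a : column vector with entry l (1-based) equal to (-1)^(l-1) C(a-1,l-1)
   for l <= a and 0 for l > a. Here l is 0-based. *)
Definition bvec (R : ringType) (k a : nat) : 'cV[R]_k :=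
  \col_(l < k) (if (l < a)%N then (-1) ^+ l * ('C(a.-1, l))%:R else 0).

Definition Aperm (R : ringType) (k : nat) (pi : 'S_k) : 'M[R]_k :=
  \matrix_(i < k, j < k) (if pi i == j then 1 else 0).

(* Main.v *)
Require Import Defs.
From HB Require Import structures.
From mathcomp Require Import all_boot all_order all_algebra all_fingroup.
From mathcomp Require Import ring lra zify.
Import Order.TTheory GRing.Theory Num.Theory.
Local Open Scope ring_scope.

Section L.
Variable R : realFieldType.

Lemma poly_zero_nat (p : {poly R}) : (forall n, p.[(n + 2)%:R] = 0) -> p = 0.
Proof.
move=> H; apply/eqP; apply/negPn/negP => Hp.
pose rs := [seq (n + 2)%:R : R | n <- iota 0 (size p)].
have A : all (root p) rs by apply/allP => x /mapP [n _ ->]; rewrite /root H.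
have U : uniq rs.
  by rewrite map_inj_uniq ?iota_uniq // => m n /eqP; rewrite eqr_nat eqn_add2r => /eqP.
by have := max_poly_roots Hp A U; rewrite size_map size_iota ltnn.
Qed.

Lemma coef_horner_C (p : {poly {poly R}}) (b : R) i :
  (p.[b%:P])`_i = (\poly_(j < size p) (p`_j)`_i).[b].
Proof.
rewrite horner_coef horner_poly coef_sum; apply: eq_bigr => j _.
by rewrite -rmorphXn coefMC.
Qed.

Lemma biv_zero (p : {poly {poly R}}) :
  (forall a b : R, a != 0 -> a != 1 -> b != 0 -> b != 1 -> p.[b%:P].[a] = 0) ->
  p = 0.
Proof.
move=> H.
have nz n : ((n + 2)%:R != 0 :> R) /\ ((n+2)%:R != 1 :> R).
  by rewrite pnatr_eq0 pnatr_eq1 addn2.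
have H1 n : p.[(n+2)%:R%:P] = 0.
  by apply: poly_zero_nat => m; case: (nz n) => ? ?; case: (nz m) => ? ?; apply: H.
apply/polyP => j; rewrite coef0; apply/polyP => i; rewrite coef0.
have Hq : \poly_(j < size p) (p`_j)`_i = 0.
  by apply: poly_zero_nat => n; rewrite -coef_horner_C H1 coef0.
case: (ltnP j (size p)) => hj.
  by have := congr1 (fun q : {poly R} => q`_j) Hq; rewrite coef_poly hj coef0.
by rewrite (nth_default _ hj) coef0.
Qed.

Lemma coef_1subX r t : ((1 - 'X : {poly R}) ^+ r)`_t = (-1) ^+ t * ('C(r, t))%:R.
Proof.
elim: r t => [|r IH] t.
  by rewrite expr0 coef1; case: t => [|t]; rewrite ?expr0 ?mulr1 ?bin0 // bin0n mulr0.
rewrite exprS mulrBl mul1r coefB coefXM IH.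
case: t => [|t] /=; first by rewrite !bin0 subr0.
rewrite IH binS natrD exprS; ring.
Qed.

End L.
Section L.
Variable R : realFieldType.

Definition Dp (k m : nat) : {poly R} :=
  ((m`!)%:R * ((k - m.+1)`!)%:R)^-1 *: ('X^m * (1 - 'X)^+(k - m.+1))^`().

Lemma exp_pred (x : R) m : x != 0 -> x ^+ m.-1 *+ m = m%:R / x * x ^+ m.
Proof. by move=> hx; case: m => [|m] /=; rewrite ?mul0r ?mulr0n // exprS; field. Qed.

Lemma Dp_eval k m (a : R) : a != 0 -> a != 1 ->
  (Dp k m).[a] = - (((k - m.+1)%:R / (1 - a) - m%:R / a) * (a ^+ m * (1 - a) ^+ (k - m.+1)))
     / ((m`!)%:R * ((k - m.+1)`!)%:R).
Proof.
move=> h0 h1.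
have h1' : 1 - a != 0 by rewrite subr_eq0 eq_sym.
rewrite /Dp derivM derivXn deriv_exp derivB derivC derivX.
set RHS := (RHS).
rewrite !hornerE !hornerMn !hornerE.
rewrite -mulrnAr !exp_pred // /RHS.
field. by rewrite h0 h1' !pnatr_eq0 -!lt0n !fact_gt0.
Qed.


End L.


Section L2.
Variable R : realFieldType.

Lemma fact_neq0 n : ((n`!)%:R != 0 :> R).
Proof. by rewrite pnatr_eq0 -lt0n fact_gt0. Qed.

Lemma sign_sq m : ((-1) ^+ m * (-1) ^+ m = 1 :> R).
Proof. by elim: m => [|m IH]; rewrite ?expr0 ?mulr1 // !exprS mulrACA mulrNN !mul1r IH. Qed.

Lemma Dp_coef k m i : (m < k)%N -> (Dp R k m)`_i =
  if (i + 2 <= k)%N then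
    - (-1) ^+ i / ((i`!)%:R * ((k - i - 2)`!)%:R) *
      (if (m < i + 2)%N then (-1) ^+ m * ('C(i.+1, m))%:R else 0)
  else 0.
Proof.
move=> hm.
rewrite /Dp coefZ coef_deriv coefXnM coef_1subX.
case: (ltnP i.+1 m) => h.
  have -> : (m < i + 2)%N = false by lia.
  by rewrite mul0rn mulr0 mulr0 if_same.
case: (leqP (i + 2) k) => hk; last first.
  by rewrite bin_small ?mulr0 ?mul0rn ?mulr0 //; lia.
have -> : (m < i + 2)%N = true by lia.
set t := (i.+1 - m)%N; set r := (k - m.+1)%N; set s := (k - i - 2)%N.
have E1 : ('C(r, t) * (t`! * s`!))%N = r`!.
  have -> : s = (r - t)%N by rewrite /s /r /t; lia.
  by apply: bin_fact; rewrite /r /t; lia.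
have E2 : ('C(i.+1, m) * (m`! * t`!))%N = (i.+1)`!.
  by apply: bin_fact.
have F1 : ('C(r, t))%:R = (r`!)%:R / ((t`!)%:R * (s`!)%:R) :> R.
  by rewrite -E1 !natrM mulfK // mulf_neq0 // fact_neq0.
have F2 : ('C(i.+1, m))%:R = (i.+1)%:R * (i`!)%:R / ((m`!)%:R * (t`!)%:R) :> R.
  by rewrite -natrM -factS -E2 !natrM mulfK // mulf_neq0 // fact_neq0.
have S : (-1) ^+ t = - (-1) ^+ i * (-1) ^+ m :> R.
  have : (-1) ^+ i.+1 = (-1) ^+ t * (-1) ^+ m :> R.
    by rewrite -exprD /t subnK.
  rewrite exprS => H.
  by rewrite -[- (-1) ^+ i]mulN1r H -mulrA sign_sq mulr1.
rewrite F1 F2 S -mulr_natr.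
field.
by rewrite !fact_neq0.
Qed.
End L2.

Section L3.
Variable R : realFieldType.

Lemma mx_perm k (pi : 'S_k) (u v : 'cV[R]_k) :
  ((u^T *m Aperm R pi *m v) 0 0) = \sum_(m < k) u m 0 * v (pi m) 0.
Proof.
rewrite mxE; under eq_bigr do rewrite mxE mulr_suml.
rewrite exchange_big /=; apply: eq_bigr => m _.
rewrite (bigD1 (pi m)) //= !mxE eqxx mulr1 big1 ?addr0 // => l /negbTE hl.
by rewrite !mxE eq_sym hl mulr0 mul0r.
Qed.

Definition Qp k (pi : 'S_k) : {poly {poly R}} :=
  \sum_(m < k) ((k`!)%:R *: Dp R k m)%:P * map_poly polyC (Dp R k (pi m)).

Lemma Qp_eval k (pi : 'S_k) (a b : R) : a != 0 -> a != 1 -> b != 0 -> b != 1 ->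
  (Qp k pi).[b%:P].[a] = gradP pi a b.
Proof.
move=> ha0 ha1 hb0 hb1.
have ha : 1 - a != 0 by rewrite subr_eq0 eq_sym.
have hb : 1 - b != 0 by rewrite subr_eq0 eq_sym.
rewrite /Qp /gradP horner_sum horner_sum mulr_sumr; apply: eq_bigr => m _.
rewrite hornerM hornerC horner_map /= hornerM !hornerC hornerZ !Dp_eval //.
field.
by rewrite !fact_neq0 ha hb ha0 hb0.
Qed.

Lemma Qp_coef k (pi : 'S_k) i j :
  coef2 (Qp k pi) i j = \sum_(m < k) (k`!)%:R * (Dp R k m)`_i * (Dp R k (pi m))`_j.
Proof.
rewrite /coef2 /Qp coef_sum coef_sum; apply: eq_bigr => m _.
by rewrite coefCM coef_map /= coefMC coefZ.
Qed.

End L3.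

Theorem lemma7 (R : realFieldType) (k : nat) (pi : 'S_k)
  (P : {poly {poly R}})
  (hP : forall a b : R, a != 0 -> a != 1 -> b != 0 -> b != 1 ->
          P.[b%:P].[a] = gradP pi a b)
  (i j : nat) :
  coef2 P i j =
  if ((i + 2 <= k)%N && (j + 2 <= k)%N) then
    (k`!)%:R * (-1) ^+ (i + j) /
      ((i`!)%:R * (j`!)%:R * ((k - i - 2)`!)%:R * ((k - j - 2)`!)%:R) *
    (((bvec R k (i + 2))^T *m Aperm R pi *m bvec R k (j + 2)) 0 0)
  else 0.
Proof.
have -> : P = Qp R k pi.
  apply/eqP; rewrite -subr_eq0; apply/eqP; apply: biv_zero => a b ha0 ha1 hb0 hb1.
  by rewrite !hornerE hP // Qp_eval // subrr.
rewrite Qp_coef.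
case: (boolP (i + 2 <= k)%N) => hi /=; last first.
  by rewrite big1 // => m _; rewrite Dp_coef ?ltn_ord // (negbTE hi) mulr0 mul0r.
case: (boolP (j + 2 <= k)%N) => hj /=; last first.
  by rewrite big1 // => m _; rewrite (Dp_coef _ _ (pi m)) ?ltn_ord // (negbTE hj) mulr0.
rewrite mx_perm mulr_sumr; apply: eq_bigr => m _.
rewrite !Dp_coef ?ltn_ord // hi hj !mxE !addn2 /=.
rewrite exprD.
set X := (if (m < i.+2)%N then _ else _); set Y := (if (pi m < j.+2)%N then _ else _).
field.
by rewrite !fact_neq0.
Qed.
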